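(* Let $k\ge 2$ and let $W\in\mathcal W^2_{5\times(3k+1)}$ be such that rows $W[2],W[3],W[4]$ each contain exactly $2k+1$ filled cells (i.e. $e(W[2])=e(W[3])=e(W[4])=1/3$). Then $e(W[1])\le -5/3$ or $e(W[5])\le -5/3$ (i.e. $W[1]$ or $W[5]$ contains at most $2k-1$ filled cells).
   Context: A 2-dimensional binary word of dimensions $h\times w$ is an $h\times w$ matrix with entries in $\{\square,\blacksquare\}$ (filled cells $\blacksquare$, empty cells $\square$); $|U|_\blacksquare$ is the number of filled cells of $U$. Two cells $(i,j),(i',j')$ are adjacent if $|i-i'|+|j-j'|=1$; the degree of a filled cell is the number of filled cells adjacent to it. $\mathcal W^2_{h\times w}$ is the set of $h\times w$ binary words in which every filled cell has degree at most $2$. $W[i]$ denotes row $i$ of $W$. The excess of an $a\times b$ word $U$ is $e(U)=|U|_\blacksquare-2ab/3$; for a row of length $3k+1$, $e=|\text{row}|_\blacksquare-2(3k+1)/3$. *)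

(* Defs.v *)
From mathcomp Require Import all_boot all_order all_algebra.
Set Implicit Arguments. Unset Strict Implicit. Unset Printing Implicit Defensive.
Import Order.TTheory GRing.Theory Num.Theory.

(* A 2-dimensional binary word of dimensions h x w: entry true = filled cell,
   false = empty cell.  Row i (0-based) of W is W i. *)
Definition bword (h w : nat) := 'I_h -> 'I_w -> bool.

Definition adjacent h w (c c' : 'I_h * 'I_w) : bool :=
  (`|(c.1 : nat) - (c'.1 : nat)| + `|(c.2 : nat) - (c'.2 : nat)|)%N == 1%N.

Definition degree h w (W : bword h w) (c : 'I_h * 'I_w) : nat :=
  #|[set c' : 'I_h * 'I_w | adjacent c c' && W c'.1 c'.2]|.

Definition inW2 h w (W : bword h w) : Prop :=
  forall c : 'I_h * 'I_w, W c.1 c.2 -> (degree W c <= 2)%N.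

Definition row_filled h w (W : bword h w) (i : 'I_h) : nat :=
  #|[set j : 'I_w | W i j]|.

Definition row_excess h w (W : bword h w) (i : 'I_h) : rat :=
  ((row_filled W i)%:R - 2%:R * w%:R / 3%:R)%R.

(* Main.v *)
Require Import Defs.
From mathcomp Require Import all_boot all_order all_algebra.
From mathcomp Require Import zify lra.
Import GRing.Theory Num.Theory.
Set Implicit Arguments. Unset Strict Implicit.

Definition zo (n : nat) (f : nat -> bool) := forall {j}, f j -> 0 < j <= n.
Definition cnt n (f : nat -> bool) := \sum_(1 <= j < n.+1) (f j : nat).
Definition P2 n (X : nat -> bool) := \sum_(1 <= j < n) ((X j && X j.+1) : nat).
Definition N00 n (X : nat -> bool) := \sum_(1 <= j < n) ((~~ X j && ~~ X j.+1) : nat).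
Definition V2 n (X Y : nat -> bool) := \sum_(1 <= j < n.+1) ((X j && Y j) : nat).
Definition N2 n (X Y : nat -> bool) := \sum_(1 <= j < n.+1) ((~~ X j && ~~ Y j) : nat).
Definition dg (X U V : nat -> bool) j : nat := X j.-1 + X j.+1 + U j + V j.
Definition degok (X U V : nat -> bool) := forall {j}, X j -> dg X U V j <= 2.
Definition SL n (X U V : nat -> bool) := \sum_(1 <= j < n.+1) (X j * (2 - dg X U V j)).

Lemma I1 n X : zo n X -> 0 < n -> 2 * cnt n X + N00 n X = P2 n X + (n - 1) + X 1 + X n.
Proof.
move=> hz hn; rewrite /cnt /N00 /P2.
have e1 : \sum_(1 <= j < n.+1) (X j : nat) = \sum_(1 <= j < n) (X j : nat) + X n by rewrite big_nat_recr.
have e2 : \sum_(1 <= j < n.+1) (X j : nat) = X 1 + \sum_(1 <= j < n) (X j.+1 : nat).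
  by move: hz; case: n hn {e1} => // n _ _; rewrite big_nat_recl.
have e3 : \sum_(1 <= j < n) ((X j : nat) + X j.+1 + (~~ X j && ~~ X j.+1)) =
          \sum_(1 <= j < n) (((X j && X j.+1) : nat) + 1).
  by apply: eq_bigr => j _; case: (X j); case: (X j.+1).
rewrite !big_split /= sum_nat_const_nat in e3.
lia.
Qed.

Lemma I2 n X Y : cnt n X + cnt n Y + N2 n X Y = V2 n X Y + n.
Proof.
rewrite /cnt /N2 /V2.
have e3 : \sum_(1 <= j < n.+1) ((X j : nat) + Y j + (~~ X j && ~~ Y j)) =
          \sum_(1 <= j < n.+1) (((X j && Y j) : nat) + 1).
  by apply: eq_bigr => j _; case: (X j); case: (Y j).
rewrite !big_split /= sum_nat_const_nat in e3.
lia.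
Qed.

Lemma I3 n X U V : zo n X -> degok X U V ->
  2 * P2 n X + V2 n U X + V2 n X V + SL n X U V = 2 * cnt n X.
Proof.
move=> hz hd; rewrite /cnt /SL /V2 /P2.
have e1 : \sum_(1 <= j < n.+1) ((X j : nat) * X j.+1) = \sum_(1 <= j < n) ((X j && X j.+1) : nat).
  case: n hz hd => [|n] hz hd; first by rewrite big_geq // big_geq.
  rewrite big_nat_recr //=.
  have -> : X n.+2 = false by apply/negP => /hz; lia.
  rewrite muln0 addn0; apply: eq_bigr => j _; by case: (X j); case: (X j.+1).
have e2 : \sum_(1 <= j < n.+1) ((X j : nat) * X j.-1) = \sum_(1 <= j < n) ((X j && X j.+1) : nat).
  case: n hz hd {e1} => [|n] hz hd; first by rewrite big_geq // big_geq.
  rewrite big_nat_recl //=.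
  have -> : X 0 = false by apply/negP => /hz; lia.
  rewrite muln0 add0n; apply: eq_bigr => j _; by case: (X j); case: (X j.+1).
have e3 : \sum_(1 <= j < n.+1) ((X j : nat) * (dg X U V j) + X j * (2 - dg X U V j)) =
          \sum_(1 <= j < n.+1) (2 * X j).
  apply: eq_bigr => j _; case hX: (X j); last by [].
  have := hd j hX; lia.
have e4 : \sum_(1 <= j < n.+1) ((X j : nat) * (dg X U V j)) =
   \sum_(1 <= j < n.+1) ((X j : nat) * X j.-1) + \sum_(1 <= j < n.+1) ((X j : nat) * X j.+1)
   + \sum_(1 <= j < n.+1) ((U j && X j) : nat) + \sum_(1 <= j < n.+1) ((X j && V j) : nat).
  rewrite -!big_split; apply: eq_bigr => j _ /=; rewrite /dg.
  by case: (X j); case: (U j); case: (V j); case: (X j.-1); case: (X j.+1).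
rewrite big_split /= -big_distrr /= in e3.
lia.
Qed.

Lemma sum0_pt (m n : nat) (F : nat -> nat) : \sum_(m <= j < n) F j = 0 -> forall j, m <= j < n -> F j = 0.
Proof.
move=> /eqP; rewrite sum_nat_seq_eq0 => /allP H j hj.
by apply/eqP; apply: (implyP (H j _)); rewrite // mem_index_iota.
Qed.

Definition F0 : nat -> bool := fun _ => false.

Record hyp (k : nat) (T A B C D : nat -> bool) : Prop := Hyp {
  hk : 1 <= k;
  zT : zo (3*k+1) T; zA : zo (3*k+1) A; zB : zo (3*k+1) B; zC : zo (3*k+1) C; zD : zo (3*k+1) D;
  dT : degok T F0 A; dA : degok A T B; dB : degok B A C; dC : degok C B D; dD : degok D C F0;
  cA : cnt (3*k+1) A = 2*k+1; cB : cnt (3*k+1) B = 2*k+1; cC : cnt (3*k+1) C = 2*k+1;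
  cT : 2*k <= cnt (3*k+1) T; cD : 2*k <= cnt (3*k+1) D }.

Record facts (k : nat) (T A B C D : nat -> bool) : Prop := Facts {
  fB1 : B 1; fBn : B (3*k+1);
  fBnz : forall {j}, 1 <= j < 3*k+1 -> B j || B j.+1;
  fAB : forall {j}, 1 <= j <= 3*k+1 -> A j || B j;
  fBC : forall {j}, 1 <= j <= 3*k+1 -> B j || C j;
  fBdeg : forall {j}, B j -> dg B A C j = 2;
  fA1 : A 1; fAn : A (3*k+1);
  fAnz : forall {j}, 1 <= j < 3*k+1 -> A j || A j.+1;
  fC1 : C 1; fCn : C (3*k+1);
  fCnz : forall {j}, 1 <= j < 3*k+1 -> C j || C j.+1 }.

Lemma sum0_bool m n (F : nat -> bool) : \sum_(m <= j < n) (F j : nat) = 0 -> forall {j}, m <= j < n -> F j = false.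
Proof. move=> H j hj; have := sum0_pt H hj; by case: (F j). Qed.

Lemma get_facts k T A B C D : hyp k T A B C D -> facts k T A B C D.
Proof.
case=> hk zT zA zB zC zD dT dA dB dC dD cA cB cC cT cD.
have hn : 0 < 3*k+1 by lia.
have i1A := I1 zA hn; have i1B := I1 zB hn; have i1C := I1 zC hn.
have i2TA := I2 (3*k+1) T A; have i2AB := I2 (3*k+1) A B; have i2BC := I2 (3*k+1) B C; have i2CD := I2 (3*k+1) C D.
have i3A := I3 zA dA; have i3B := I3 zB dB; have i3C := I3 zC dC.
have hB1 : B 1 by move: i1A i1B i1C i2TA i2AB i2BC i2CD i3A i3B i3C; case: (B 1) cA cB cC cT cD; lia.
have hBn : B (3*k+1) by move: i1A i1B i1C i2TA i2AB i2BC i2CD i3A i3B i3C; case: (B (3*k+1)) cA cB cC cT cD; lia.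
have hA1 : A 1 by move: i1A i1B i1C i2TA i2AB i2BC i2CD i3A i3B i3C; case: (A 1); case: (A (3*k+1)) cA cB cC cT cD; lia.
have hAn : A (3*k+1) by move: i1A i1B i1C i2TA i2AB i2BC i2CD i3A i3B i3C; case: (A 1); case: (A (3*k+1)) cA cB cC cT cD; lia.
have hC1 : C 1 by move: i1A i1B i1C i2TA i2AB i2BC i2CD i3A i3B i3C; case: (C 1); case: (C (3*k+1)) cA cB cC cT cD; lia.
have hCn : C (3*k+1) by move: i1A i1B i1C i2TA i2AB i2BC i2CD i3A i3B i3C; case: (C 1); case: (C (3*k+1)) cA cB cC cT cD; lia.
rewrite hB1 hBn hA1 hAn hC1 hCn in i1A i1B i1C.
have nB : N00 (3*k+1) B = 0 by move: i1A i1B i1C i2TA i2AB i2BC i2CD i3A i3B i3C cA cB cC cT cD; lia.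
have nA : N00 (3*k+1) A = 0 by move: i1A i1B i1C i2TA i2AB i2BC i2CD i3A i3B i3C cA cB cC cT cD; lia.
have nC : N00 (3*k+1) C = 0 by move: i1A i1B i1C i2TA i2AB i2BC i2CD i3A i3B i3C cA cB cC cT cD; lia.
have nAB : N2 (3*k+1) A B = 0 by move: i1A i1B i1C i2TA i2AB i2BC i2CD i3A i3B i3C cA cB cC cT cD; lia.
have nBC : N2 (3*k+1) B C = 0 by move: i1A i1B i1C i2TA i2AB i2BC i2CD i3A i3B i3C cA cB cC cT cD; lia.
have sB : SL (3*k+1) B A C = 0 by move: i1A i1B i1C i2TA i2AB i2BC i2CD i3A i3B i3C cA cB cC cT cD; lia.
split => //.
- move=> j hj; have := sum0_bool nB hj; by case: (B j); case: (B j.+1).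
- move=> j hj; have : 1 <= j < (3*k+1).+1 by lia.
  move=> /(sum0_bool nAB); by case: (A j); case: (B j).
- move=> j hj; have : 1 <= j < (3*k+1).+1 by lia.
  move=> /(sum0_bool nBC); by case: (C j); case: (B j).
- move=> j hBj; have := zB _ hBj => hj.
  have : 1 <= j < (3*k+1).+1 by lia.
  move=> /(sum0_pt sB); rewrite hBj; have := dB _ hBj; lia.
- move=> j hj; have := sum0_bool nA hj; by case: (A j); case: (A j.+1).
- move=> j hj; have := sum0_bool nC hj; by case: (C j); case: (C j.+1).
Qed.

Section S.
Variables (k : nat) (T A B C D : nat -> bool).
Hypothesis H : hyp k T A B C D.
Let F := get_facts H.

Lemma L1 j : 1 <= j -> j + 2 <= 3*k+1 -> ~~ (B j && B j.+1 && B j.+2).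
Proof.
move=> h1 h2; apply/negP => /andP [/andP [b0 b1] b2].
have d1 := fBdeg F b1; rewrite /dg /= b0 b2 in d1.
have d0 := fBdeg F b0; rewrite /dg /= b1 in d0.
have a := fAnz F (j := j); have c := fCnz F (j := j).
move: d1 d0 a c; case: (A j.+1); case: (C j.+1); case: (A j); case: (C j) => //=; lia.
Qed.

Lemma L2 j : 1 <= j -> j + 2 <= 3*k+1 -> B j.+1 -> B j || B j.+2.
Proof.
move=> h1 h2 b1; apply/negPn/negP; rewrite negb_or => /andP [/negPf b0 /negPf b2].
have a0 := fAB F (j := j); have a2 := fAB F (j := j.+2).
rewrite b0 b2 !orbF in a0 a2.
have d1 := fBdeg F b1; rewrite /dg /= b0 b2 in d1.
have hA1 : A j.+1 by move: d1; case: (A j.+1); case: (C j.+1).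
have := dA H hA1; rewrite /dg /= a0 ?a2 ?b1; try lia.
Qed.

Lemma Lper j : 1 <= j -> j + 3 <= 3*k+1 -> B (j+3) = B j.
Proof.
move=> h1 h2.
have n0 := fBnz F (j := j); have n1 := fBnz F (j := j.+1); have n2 := fBnz F (j := j.+2).
have l0 := L1 (j := j); have l1 := L1 (j := j.+1).
have m0 := L2 (j := j); have m1 := L2 (j := j.+1).
rewrite addn3.
move: n0 n1 n2 l0 l1 m0 m1.
case: (B j); case: (B j.+1); case: (B j.+2); case: (B j.+3) => //= ; lia.
Qed.

End S.

Definition Sf (T : nat -> bool) i := \sum_(1 <= j < 3*i+2) (T j : nat).
Definition Rf (A : nat -> bool) (i : nat) := (i == 0) || ~~ A (3*i).
Definition seenf (A : nat -> bool) i := has (fun j => A (3*j)) (iota 1 i).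
Definition gf (A T : nat -> bool) i : nat := if Rf A i then (if seenf A i then 2 else 0) else 1 + ~~ T (3*i+1).

Lemma step_arith (i s : nat) (r sn a1 a3 a4 t1 t2 t3 t4 : bool) :
  s + (if r then (if sn then 2 else 0) else 1 + ~~ t1) <= 2*i + (r && t1) ->
  t2 + a1 + a3 <= 2 ->
  (t2 -> t1 + t3 + 1 <= 2) ->
  (a3 -> 1 + a4 + t3 + 1 <= 2) ->
  (r -> t1 = false) -> (r -> a1) -> (~~ r -> a1 = false) -> a3 != a4 ->
  s + t2 + t3 + t4 + (if ~~ a3 then (if sn || a3 then 2 else 0) else 1 + ~~ t4)
    <= 2*(i+1) + (~~ a3 && t4).
Proof.
case: r; case: sn; case: a1; case: a3; case: a4; case: t1; case: t2; case: t3; case: t4 => //=; lia.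
Qed.

Lemma ixs (i : nat) :
  3 * i + 3 = 3 * i.+1 /\ 3 * i + 4 = 3 * i.+1 + 1 /\ (3*i+1).-1 = 3*i /\ (3*i+1).+1 = 3*i+2 /\
      (3*i+2).-1 = 3*i+1 /\ (3*i+2).+1 = 3*i+3 /\ (3*i+3).-1 = 3*i+2 /\ (3*i+3).+1 = 3*i+4 /\
      3*(i+1) = 3*i+3 /\ 3*(i+1)+1 = 3*i+4 /\ i.+1 = i + 1.
Proof. repeat split; lia. Qed.

Lemma fin_arith c k (r t : bool) : 2*k <= c -> c + (if r then (if true then 2 else 0) else 1 + ~~ t) <= 2*k + (r && t) -> False.
Proof. case: r; case: t => /=; lia. Qed.

Section TL.
Variables (k : nat) (T A B : nat -> bool).
Hypotheses (hk : 1 <= k) (zT : zo (3*k+1) T) (A0 : A 0 = false)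
  (dT : degok T F0 A) (dA : degok A T B)
  (hA1 : A 1) (hAp : forall m, m < k -> A (3 * m+2))
  (hB1 : B 1) (hBb : forall m, m < k -> B (3 * m+3) && B (3 * m+4))
  (hx : forall m, m < k -> A (3 * m+3) != A (3 * m+4)).
Local Notation S := (Sf T).
Local Notation R := (Rf A).
Local Notation seen := (seenf A).
Local Notation g := (gf A T).

Lemma Sstep i : S (i+1) = S i + T (3*i+2) + T (3*i+3) + T (3*i+4).
Proof.
rewrite /Sf (_ : 3*(i+1)+2 = (3*i+4).+1); last by lia.
rewrite big_nat_recr /=; last by lia.
rewrite (_ : 3*i+4 = (3*i+3).+1); last by lia.
rewrite big_nat_recr /=; last by lia.
rewrite (_ : 3*i+3 = (3*i+2).+1); last by lia.
rewrite big_nat_recr /=; last by lia.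
by rewrite -!addnA.
Qed.

Lemma seenS i : seen (i+1) = seen i || A (3*(i+1)).
Proof. by rewrite /seenf iotaD has_cat /= orbF add1n addn1. Qed.

Lemma inv i : i <= k -> S i + g i <= 2*i + (R i && T (3*i+1)).
Proof.
elim: i => [|i IH] hi.
  rewrite /Sf /gf /Rf /seenf /=.
  have := dA hA1; rewrite /dg /= A0 (hAp (m:=0)) //= hB1.
  rewrite big_nat1; case: (T 1) => //=.
have [q1 [q2 [q3 [q4 [q5 [q6 [q7 [q8 [q9 [q10 q11]]]]]]]]]] := ixs i.
have IH' := IH (ltnW hi).
have a2 := hAp hi; have /andP [b3 b4] := hBb hi; have x34 := hx hi.
have a1 : R i -> A (3*i+1).
  rewrite /Rf; case: i {IH IH' q1 q2 q3 q4 q5 q6 q7 q8 q9 q10 q11} hi a2 b3 b4 x34 => [|i] hi a2 b3 b4 x34 /=; first by [].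
  have [r1 [r2 _]] := ixs i.
  move=> na; have := hx (ltnW hi).
  by rewrite r1 r2 (negPf na); case: (A _).
have a1' : ~~ R i -> A (3*i+1) = false.
  rewrite /Rf; case: i {IH IH' a1 q1 q2 q3 q4 q5 q6 q7 q8 q9 q10 q11} hi a2 b3 b4 x34 => [|i] hi a2 b3 b4 x34 /=; first by [].
  have [r1 [r2 _]] := ixs i.
  rewrite negbK => ya; have := hx (ltnW hi).
  by rewrite r1 r2 ya; case: (A _).
have b1 : R i -> B (3*i+1).
  rewrite /Rf; case: i {IH IH' a1 a1' q1 q2 q3 q4 q5 q6 q7 q8 q9 q10 q11} hi a2 b3 b4 x34 => [|i] hi a2 b3 b4 x34 /=; first by [].
  have [r1 [r2 _]] := ixs i.
  move=> _; have /andP [_ ] := hBb (ltnW hi).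
  by rewrite r2.
have t1R : R i -> T (3*i+1) = false.
  move=> hR; have := dA (a1 hR); rewrite /dg q3 q4 a2 (b1 hR).
  by case: (T _); case: (A _).
have dA2 : T (3*i+2) + A (3*i+1) + A (3*i+3) <= 2.
  have := dA a2; rewrite /dg q5 q6; case: (T _); case: (A _); case: (A _); case: (B _) => //=.
have dT2 : T (3*i+2) -> T (3*i+1) + T (3*i+3) + 1 <= 2.
  move=> ht; have := dT ht; rewrite /dg /F0 q5 q6 a2 /= addn0; exact.
have dA3 : A (3*i+3) -> 1 + A (3*i+4) + T (3*i+3) + 1 <= 2.
  move=> ha; have := dA ha; rewrite /dg q7 q8 a2 b3; exact.
rewrite q11 Sstep.
have -> : g (i+1) = if ~~ A (3*i+3) then (if seen i || A (3*i+3) then 2 else 0) else 1 + ~~ T (3*i+4).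
  by rewrite /gf /Rf seenS q10 q9 addn1.
have -> : R (i+1) = ~~ A (3*i+3) by rewrite /Rf q9 addn1.
rewrite q10.
have := @step_arith i (S i) (R i) (seen i) (A (3*i+1)) (A (3*i+3)) (A (3*i+4)) (T (3*i+1)) (T (3*i+2)) (T (3*i+3)) (T (3*i+4)).
move=> /(_ IH') /(_ dA2) /(_ dT2) /(_ dA3) /(_ t1R) /(_ a1) /(_ a1') /(_ x34).
exact.
Qed.

Lemma Tlem : 2*k <= cnt (3*k+1) T -> A 3 = false.
Proof.
move=> hc; apply/negP => a3.
have := inv (leqnn k).
have -> : Sf T k = cnt (3*k+1) T by rewrite /Sf /cnt -[(3*k+1).+1]addn1 -addnA.
have hs : seen k.
  rewrite /seenf; apply/hasP; exists 1; last by rewrite muln1.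
  by rewrite mem_iota leqnn /= add1n ltnS.
rewrite /gf hs; exact: fin_arith hc.
Qed.

End TL.

Lemma degok_swap X U V : degok X U V -> degok X V U.
Proof. move=> h j hj; have := h j hj; rewrite /dg; lia. Qed.

Lemma struct_left k T A B C D : hyp k T A B C D -> B 2 = false ->
  forall m, m < k -> [&& ~~ B (3 * m+2), B (3 * m+3) & B (3 * m+4)].
Proof.
move=> H b2; have F := get_facts H; have hk := hk H.
have b3 : B 3 by have := fBnz F (j := 2); rewrite b2 /=; apply; lia.
elim=> [|m IH] hm.
  rewrite /= b2 b3 /=; rewrite (_ : 4 = 1 + 3) // (Lper H (j := 1)); [exact: fB1 F | done | lia].
have /and3P [x y z] := IH (ltnW hm).
rewrite (_ : 3 * m.+1 + 2 = (3 * m + 2) + 3); last by lia.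
rewrite (_ : 3 * m.+1 + 3 = (3 * m + 3) + 3); last by lia.
rewrite (_ : 3 * m.+1 + 4 = (3 * m + 4) + 3); last by lia.
rewrite (Lper H (j := 3 * m + 2)); last (by lia); last by lia.
rewrite (Lper H (j := 3 * m + 3)); last (by lia); last by lia.
rewrite (Lper H (j := 3 * m + 4)); last (by lia); last by lia.
by rewrite x y z.
Qed.

Lemma ixm m : (3 * m + 3).-1 = 3 * m + 2 /\ (3 * m + 3).+1 = 3 * m + 4 /\
  (3 * m + 4).-1 = 3 * m + 3 /\ (3 * m + 4).+1 = 3 * m + 5 /\ 3 * m + 5 = 3 * m.+1 + 2.
Proof. repeat split; lia. Qed.

Lemma bool_arith1 (b2 b4 a c : bool) : b2 + b4 + a + c = 2 -> b2 = false -> b4 = true -> a + c = 1.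
Proof. by case: b2; case: b4; case: a; case: c. Qed.

Lemma core_left k T A B C D : hyp k T A B C D -> B 2 = false -> False.
Proof.
move=> H b2; have F := get_facts H; have hk := hk H.
have St := struct_left H b2.
have Bout : B (3 * k + 2) = false by apply/negP => /(zB H); lia.
have xx : forall m, m < k -> (A (3 * m + 3) + C (3 * m + 3) = 1) /\ (A (3 * m + 4) + C (3 * m + 4) = 1).
  move=> m hm; have /and3P [x y z] := St m hm.
  have [q1 [q2 [q3 [q4 q5]]]] := ixm m.
  have y5 : B (3 * m + 5) = false.
    case: (ltnP m.+1 k) => h.
      have /and3P [x' _ _] := St m.+1 h.
      by rewrite q5 (negPf x').
    have e : 3 * m + 5 = 3 * k + 2 by move: h hm; lia.
    by rewrite e.
  have d3 := fBdeg F y; have d4 := fBdeg F z.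
  rewrite /dg q1 q2 in d3; rewrite /dg q3 q4 in d4.
  split; [exact: bool_arith1 d3 (negPf x) z | ].
  move: d4; rewrite y5 y; case: (A _); case: (C _) => //.
have xA : forall m, m < k -> A (3 * m + 3) != A (3 * m + 4).
  move=> m hm; have [u v] := xx m hm.
  have hj : 1 <= 3 * m + 3 < 3 * k + 1 by move: hm; lia.
  have w := fAnz F hj; have w' := fCnz F hj.
  have [q1 [q2 [q3 [q4 q5]]]] := ixm m.
  rewrite q2 in w w'.
  move: w w' u v; case: (A _); case: (A _); case: (C _); case: (C _) => //.
have xC : forall m, m < k -> C (3 * m + 3) != C (3 * m + 4).
  move=> m hm; have [u v] := xx m hm; have := xA m hm.
  move: u v; case: (A _); case: (A _); case: (C _); case: (C _) => //.
have hB : forall m, m < k -> B (3 * m + 3) && B (3 * m + 4).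
  by move=> m hm; have /and3P [_ -> ->] := St m hm.
have hAp : forall m, m < k -> A (3 * m + 2).
  move=> m hm; have /and3P [x _ _] := St m hm.
  have := fAB F (j := 3 * m + 2); rewrite (negPf x) orbF; apply; lia.
have hCp : forall m, m < k -> C (3 * m + 2).
  move=> m hm; have /and3P [x _ _] := St m hm.
  have := fBC F (j := 3 * m + 2); rewrite (negPf x) /=; apply; lia.
have A0 : A 0 = false by apply/negP => /(zA H).
have C0 : C 0 = false by apply/negP => /(zC H).
have tA := Tlem hk A0 (dT H) (dA H) (fA1 F) hAp (fB1 F) hB xA (cT H).
have tC := Tlem hk C0 (degok_swap (dD H)) (degok_swap (dC H)) (fC1 F) hCp (fB1 F) hB xC (cD H).
have [u _] := xx 0 hk.
by move: u; rewrite tA tC.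
Qed.

Definition rv n (f : nat -> bool) j := f (n.+1 - j).

Lemma rv_zo n f : zo n f -> zo n (rv n f).
Proof. move=> h j /h; rewrite /rv; lia. Qed.

Lemma rv_deg n X U V : zo n X -> degok X U V -> degok (rv n X) (rv n U) (rv n V).
Proof.
move=> hz h j hj; have hj' := hz _ hj.
have := h _ hj; rewrite /dg /rv.
have e1 : n.+1 - j.-1 = (n.+1 - j).+1.
  move: hj'; lia.
have e2 : n.+1 - j.+1 = (n.+1 - j).-1.
  move: hj'; lia.
rewrite e1 e2; lia.
Qed.

Lemma rv_cnt n f : cnt n (rv n f) = cnt n f.
Proof.
rewrite /cnt big_nat_rev /=; apply: eq_big_nat => j hj.
rewrite /rv; congr (nat_of_bool (f _)); move: hj; lia.
Qed.

Lemma rv_hyp k T A B C D : hyp k T A B C D ->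
  hyp k (rv (3*k+1) T) (rv (3*k+1) A) (rv (3*k+1) B) (rv (3*k+1) C) (rv (3*k+1) D).
Proof.
case=> hk zT zA zB zC zD dT dA dB dC dD cA cB cC cT cD; split => //;
  rewrite ?rv_cnt //; try exact: rv_zo.
- exact: (rv_deg zT dT).
- exact: (rv_deg zA dA).
- exact: (rv_deg zB dB).
- exact: (rv_deg zC dC).
- exact: (rv_deg zD dD).
Qed.

Lemma per3 k T A B C D : hyp k T A B C D -> forall m, 3 * m + 3 <= 3 * k + 1 -> B (3 * m + 3) = B 3.
Proof.
move=> H; elim=> [|m IH] hm //.
rewrite (_ : 3 * m.+1 + 3 = (3 * m + 3) + 3); last by lia.
rewrite (Lper H (j := 3 * m + 3)); [apply: IH | | ]; lia.
Qed.

Theorem nat_main k T A B C D : hyp k T A B C D -> False.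
Proof.
move=> H; case b2: (B 2); last exact: (core_left H b2).
have F := get_facts H; have hk := hk H.
have b3 : B 3 = false.
  have := L1 H (j := 1) (leqnn 1) ltac:(lia); rewrite (fB1 F) b2 /=; by case: (B 3).
apply: (core_left (rv_hyp H)).
rewrite /rv (_ : (3 * k + 1).+1 - 2 = 3 * (k - 1) + 3); last by lia.
rewrite (per3 H); [exact: b3 | lia].
Qed.

Lemma card4 (T : finType) (S : {set T}) (key : T -> nat * nat) (b1 b2 b3 b4 : bool) (k1 k2 k3 k4 : nat * nat) :
  (b1 -> exists2 x, x \in S & key x = k1) -> (b2 -> exists2 x, x \in S & key x = k2) ->
  (b3 -> exists2 x, x \in S & key x = k3) -> (b4 -> exists2 x, x \in S & key x = k4) ->
  uniq [:: k1; k2; k3; k4] -> b1 + b2 + b3 + b4 <= #|S|.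
Proof.
move=> h1 h2 h3 h4 hu.
have hs : size (mask [:: b1; b2; b3; b4] [:: k1; k2; k3; k4]) = b1 + b2 + b3 + b4 by rewrite size_mask //= !addnA addn0.
have us : uniq (mask [:: b1; b2; b3; b4] [:: k1; k2; k3; k4]) by exact: mask_uniq.
have sub : {subset (mask [:: b1; b2; b3; b4] [:: k1; k2; k3; k4]) <= map key (enum S)}.
  move=> x.
  have H : forall b k, (b -> exists2 y, y \in S & key y = k) -> b -> k \in map key (enum S).
    move=> b k h hb; have [y yS <-] := h hb; by apply: map_f; rewrite mem_enum.
  clear hs us; case: b1 h1; case: b2 h2; case: b3 h3; case: b4 h4 => h4 h3 h2 h1 /=;
    rewrite ?inE; repeat (case/orP; [move/eqP->; apply: H; eauto|]); try (move/eqP->; apply: H; eauto); done.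
rewrite -hs cardE -(size_map key); exact: uniq_leq_size.
Qed.


Definition G n (W : bword 5 n) (i j : nat) : bool :=
  [exists r : 'I_5, exists c : 'I_n, [&& val r == i, val c == j.-1, 0 < j & W r c]].

Lemma GP n (W : bword 5 n) i j : reflect (exists r : 'I_5, exists c : 'I_n, [/\ val r = i, val c = j.-1, 0 < j & W r c]) (G W i j).
Proof.
apply: (iffP existsP) => [[r /existsP [c /and4P [/eqP h1 /eqP h2 h3 h4]]]|[r [c [h1 h2 h3 h4]]]].
  by exists r, c.
by exists r; apply/existsP; exists c; rewrite h1 h2 h3 h4 !eqxx.
Qed.

Lemma G_zo n (W : bword 5 n) i : zo n (G W i).
Proof. move=> j /GP [r [c [_ h2 h3 _]]]; have := ltn_ord c; rewrite h2; lia. Qed.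

Lemma G5 n (W : bword 5 n) j : G W 5 j = false.
Proof. case: GP => // -[r [c [h1 _ _ _]]]; by have := ltn_ord r; rewrite h1. Qed.

Definition Gup n (W : bword 5 n) i j : bool := if i is i'.+1 then G W i' j else false.

Lemma Gdeg n (W : bword 5 n) : inW2 W -> forall i j, G W i j ->
  G W i j.-1 + G W i j.+1 + Gup W i j + G W i.+1 j <= 2.
Proof.
move=> hW i j /GP [r [c [hr hc hj hrc]]].
apply: leq_trans (hW (r, c) hrc); rewrite /degree.
pose key (x : 'I_5 * 'I_n) := ((val x.1).+1, (val x.2).+1).
refine (@card4 _ [set c' | adjacent (r, c) c' && W c'.1 c'.2] key _ _ _ _ (i.+1, j.-1) (i.+1, j.+1) (i, j) (i.+2, j) _ _ _ _ _).
- move=> /GP [r' [c' [h1 h2 h3 h4]]]; exists (r', c').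
    by rewrite inE /adjacent /= h4 h1 h2 hr hc andbT; apply/eqP; lia.
  by rewrite /key /= h1 h2; congr pair; lia.
- move=> /GP [r' [c' [h1 h2 h3 h4]]]; exists (r', c').
    by rewrite inE /adjacent /= h4 h1 h2 hr hc andbT; apply/eqP; lia.
  by rewrite /key /= h1 h2; congr pair; lia.
- rewrite /Gup; case: i hr => [|i] hr //.
  move=> /GP [r' [c' [h1 h2 h3 h4]]]; exists (r', c').
    by rewrite inE /adjacent /= h4 h1 h2 hr hc andbT; apply/eqP; lia.
  by rewrite /key /= h1 h2; congr pair; lia.
- move=> /GP [r' [c' [h1 h2 h3 h4]]]; exists (r', c').
    by rewrite inE /adjacent /= h4 h1 h2 hr hc andbT; apply/eqP; lia.
  by rewrite /key /= h1 h2; congr pair; lia.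
- rewrite /= !inE !xpair_eqE; apply/andP; split; first by apply/negP; lia.
  apply/andP; split; first by apply/negP; lia.
  apply/andP; split; first by apply/negP; lia.
  done.
Qed.

Lemma G_cnt n (W : bword 5 n) i : i < 5 -> cnt n (G W i) = row_filled W (inord i).
Proof.
move=> hi; rewrite /row_filled /cnt.
rewrite -sum1_card big_add1 /= big_mkord [RHS]big_mkcond /=; apply: eq_bigr => j _.
rewrite inE.
have -> : G W i j.+1 = W (inord i) j.
  apply/GP/idP => [[r [c [h1 h2 _ h4]]]|h].
    have -> : inord i = r by apply: val_inj; rewrite /= h1; exact: inordK.
    have -> : j = c by apply: val_inj; rewrite /= h2.
    exact: h4.
  by exists (inord i), j; split => //; exact: inordK.
by case: (W _ _).
Qed.

Lemma excess_le (r k : nat) : (r < 2 * k)%N ->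
  (((r%:R - 2%:R * (3 * k + 1)%:R / 3%:R) : rat) <= - (5%:R / 3%:R))%R.
Proof.
move=> h.
have h' : ((r%:R + 1 : rat) <= 2 * k%:R)%R.
  have : ((r.+1)%:R <= (2 * k)%:R :> rat)%R by rewrite ler_nat.
  by rewrite -natr1 natrM.
rewrite natrD natrM.
lra.
Qed.

Unset Implicit Arguments. Set Strict Implicit.
Local Open Scope ring_scope.

(* Rows W[1..5] of the paper are rows 0..4 here. *)
Theorem mainTheorem13 (k : nat) (hk : (2 <= k)%N) (W : bword 5 (3 * k + 1))
  (hW : inW2 W)
  (h2 : row_filled W (inord 1) = (2 * k + 1)%N)
  (h3 : row_filled W (inord 2) = (2 * k + 1)%N)
  (h4 : row_filled W (inord 3) = (2 * k + 1)%N) :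
  row_excess W (inord 0) <= - (5%:R / 3%:R) \/
  row_excess W (inord 4) <= - (5%:R / 3%:R).
Proof.
have [l0|g0] := ltnP (row_filled W (inord 0)) (2 * k).
  by left; exact: excess_le.
have [l4|g4] := ltnP (row_filled W (inord 4)) (2 * k).
  by right; exact: excess_le.
exfalso.
apply: (@nat_main k (G W 0) (G W 1) (G W 2) (G W 3) (G W 4)).
split.
- exact: ltnW.
- exact: G_zo.
- exact: G_zo.
- exact: G_zo.
- exact: G_zo.
- exact: G_zo.
- move=> j hj; exact: (Gdeg hW hj).
- move=> j hj; exact: (Gdeg hW hj).
- move=> j hj; exact: (Gdeg hW hj).
- move=> j hj; exact: (Gdeg hW hj).
- move=> j hj; have := Gdeg hW hj; rewrite G5; exact.
- by rewrite G_cnt.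
- by rewrite G_cnt.
- by rewrite G_cnt.
- by rewrite G_cnt.
- by rewrite G_cnt.
Qed.
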